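(* The condition \[ r(v)r''(v)+r'(v)\le 1 \quad\text{for all } v\in\big(\overline p_{Q,c}(q_h),\overline p_{Q,c}(q_\ell)\big) \] holds for every choice of $0<q_\ell<q_h<\infty$ and $c$ with $0<c<q_\ell$ (where $Q=[q_\ell,q_h]$) if and only if $r(v)r''(v)+r'(v)\le 1$ for every $v\in(0,1)$ with $\psi(v)>0$.
   Context: Let $F$ be a probability distribution on $[0,1]$ with support $[0,1]$ admitting a twice continuously differentiable density $f:(0,1)\to\mathbb{R}_{>0}$. Define the inverse hazard rate $r(v)=(1-F(v))/f(v)$ and the virtual valuation $\psi(v)=v-r(v)$ on $(0,1)$, and assume $\psi'(v)>0$ whenever $\psi(v)>0$. Given $Q=[q_\ell,q_h]$ with $0<q_\ell<q_h<\infty$ and a cost $c$ with $0<c<q_\ell$, for $q\in Q$ let $p_{Q,c}(q)$ be the unique maximizer over $p\in\mathbb{R}$ of $(p-c)\big(1-F(p/q)\big)$ and $\overline p_{Q,c}(q)=p_{Q,c}(q)/q$. *)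

(* Defs.v *)
From Stdlib Require Import Reals.
From Coquelicot Require Import Coquelicot.
Open Scope R_scope.

Definition density_dist (F f : R -> R) : Prop :=
  (forall x, x <= 0 -> F x = 0) /\
  (forall x, 1 <= x -> F x = 1) /\
  (forall x, continuous F x) /\
  (forall v, 0 < v < 1 -> is_derive F v (f v)) /\
  (forall v, 0 < v < 1 -> 0 < f v) /\
  (forall v, 0 < v < 1 -> ex_derive f v) /\
  (forall v, 0 < v < 1 -> ex_derive (Derive f) v) /\
  (forall v, 0 < v < 1 -> continuous (Derive (Derive f)) v).

Definition r (F f : R -> R) (v : R) : R := (1 - F v) / f v.
Definition psi (F f : R -> R) (v : R) : R := v - r F f v.

Definition r1 (F f : R -> R) (v : R) : R := Derive (r F f) v.
Definition r2 (F f : R -> R) (v : R) : R := Derive (Derive (r F f)) v.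

Definition revenue (F : R -> R) (c q p : R) : R := (p - c) * (1 - F (p / q)).

Definition is_opt_price (F : R -> R) (c q p : R) : Prop :=
  forall p', revenue F c q p' <= revenue F c q p.

Definition cond_at (F f : R -> R) (v : R) : Prop :=
  r F f v * r2 F f v + r1 F f v <= 1.

(* Main.v *)
Require Import Defs.
From Stdlib Require Import Reals Lra Classical.
From Coquelicot Require Import Coquelicot.
Open Scope R_scope.



Lemma cont_ed (g : R -> R) x : continuity_pt g x -> forall eps, eps > 0 ->
  exists d, d > 0 /\ forall y, Rabs (y - x) < d -> Rabs (g y - g x) < eps.
Proof.
  intros H eps He. destruct (H eps He) as [d [Hd Hy]].
  exists d; split; auto. intros y Hyx.
  destruct (Req_dec x y) as [<-|Hne].
  - rewrite Rminus_eq_0, Rabs_R0; lra.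
  - apply (Hy y). split; [split; [exact I| exact Hne] | exact Hyx].
Qed.

Lemma deriv_pos_right (g : R -> R) x D : is_derive g x D -> D > 0 ->
  exists d, d > 0 /\ forall h, 0 < h < d -> g (x + h) > g x.
Proof.
  intros H HD. apply is_derive_Reals in H.
  destruct (H (D/2)) as [d Hd]; [lra|].
  exists d; split; [apply cond_pos|]. intros h Hh.
  assert (Hh0 : h <> 0) by lra.
  assert (Ha : Rabs h < d) by (rewrite Rabs_pos_eq; lra).
  specialize (Hd h Hh0 Ha).
  apply Rabs_def2 in Hd. destruct Hd as [_ Hd].
  assert (Hq : (g (x + h) - g x) / h > 0) by lra.
  apply Rlt_gt. apply Rminus_gt_0_lt.
  replace (g (x + h) - g x) with ((g (x + h) - g x) / h * h) by (field; lra).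
  apply Rmult_lt_0_compat; lra.
Qed.

Section S.
Variables F f : R -> R.
Hypothesis Hdist : density_dist F f.

Lemma F_incr a b : 0 <= a -> a < b -> b <= 1 -> F a < F b.
Proof.
  destruct Hdist as (H0 & H1 & Hc & Hd & Hp & _).
  intros Ha Hab Hb.
  set (df := fun x => if Rlt_dec 0 x then if Rlt_dec x 1 then f x else 1 else 1).
  assert (Hdf : forall x, df x > 0).
  { intro x; unfold df. destruct (Rlt_dec 0 x); [destruct (Rlt_dec x 1)|]; try lra. apply Hp; lra. }
  destruct (MVT_gen F a b df) as [c [_ Hc']].
  - intros x Hx. rewrite Rmin_left in Hx by lra. rewrite Rmax_right in Hx by lra.
    unfold df. destruct (Rlt_dec 0 x); [destruct (Rlt_dec x 1)|]; try lra. apply Hd; lra.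
  - intros x _. apply continuity_pt_filterlim. apply Hc.
  - assert (df c * (b - a) > 0) by (apply Rmult_lt_0_compat; [apply Hdf| lra]). lra.
Qed.

Lemma F_bounds x : 0 <= F x <= 1.
Proof.
  destruct Hdist as (H0 & H1 & _).
  destruct (Rle_dec x 0). { rewrite H0; lra. }
  destruct (Rle_dec 1 x). { rewrite H1; lra. }
  pose proof (F_incr 0 x) as A. pose proof (F_incr x 1) as B.
  rewrite (H0 0) in A by lra. rewrite (H1 1) in B by lra.
  split; [apply Rlt_le; apply A| apply Rlt_le; apply B]; lra.
Qed.

Lemma F_lt1 x : x < 1 -> F x < 1.
Proof.
  destruct Hdist as (H0 & H1 & _). intros Hx.
  destruct (Rle_dec x 0). { rewrite H0; lra. }
  pose proof (F_incr x 1) as B. rewrite (H1 1) in B by lra. apply B; lra.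
Qed.
End S.



Section S.
Variables F f : R -> R.
Hypothesis Hdist : density_dist F f.
Hypothesis Hreg : forall v, 0 < v < 1 -> psi F f v > 0 -> Derive (psi F f) v > 0.

Lemma psi_ex_derive v : 0 < v < 1 -> ex_derive (psi F f) v.
Proof.
  destruct Hdist as (H0 & H1 & Hc & Hd & Hp & Hf & _). intros Hv.
  unfold psi, r. auto_derive. repeat split.
  - exists (f v); apply Hd; auto.
  - apply Hf; auto.
  - specialize (Hp v Hv); lra.
Qed.

Lemma psi_cont v : 0 < v < 1 -> continuity_pt (psi F f) v.
Proof.
  intros Hv. apply continuity_pt_filterlim.
  exact (ex_derive_continuous (psi F f) v (psi_ex_derive v Hv)).
Qed.

Lemma mono a b : 0 < a -> a <= b -> b < 1 -> psi F f a > 0 -> psi F f b >= psi F f a.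
Proof.
  intros Ha Hab Hb Hpa.
  set (P := psi F f).
  set (E := fun t => a <= t <= b /\ forall s, a <= s <= t -> P s >= P a).
  assert (HbE : bound E). { exists b. intros t [Ht _]. lra. }
  assert (HaE : exists x, E x). { exists a. split. lra. intros s Hs. replace s with a by lra. lra. }
  destruct (completeness E HbE HaE) as [m [Hub Hlub]].
  assert (Ham : a <= m). { apply Hub. destruct HaE. split. lra. intros s Hs. replace s with a by lra. lra. }
  assert (Hmb : m <= b). { apply Hlub. intros t [Ht _]. lra. }
  assert (C1 : forall s, a <= s < m -> P s >= P a).
  { intros s Hs. destruct (classic (exists t, E t /\ s < t)) as [[t [[Ht1 Ht2] Hst]]|Hn].
    - apply Ht2; lra.
    - exfalso. assert (m <= s). { apply Hlub. intros t Et. destruct (Rle_dec t s); auto.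
        exfalso. apply Hn. exists t. split; auto; lra. } lra. }
  assert (C2 : P m >= P a).
  { destruct (Req_dec m a) as [->|Hne]; [lra|].
    apply Rnot_lt_ge. intro Hlt.
    destruct (cont_ed P m (psi_cont m ltac:(lra)) (P a - P m)) as [d [Hd Hy]]; [lra|].
    set (s := Rmax a (m - d/2)).
    assert (Hs1 : a <= s) by apply Rmax_l.
    assert (Hs2 : s < m) by (unfold s; apply Rmax_lub_lt; lra).
    assert (Hs3 : Rabs (s - m) < d).
    { rewrite Rabs_left by lra. assert (m - d/2 <= s) by apply Rmax_r. lra. }
    specialize (Hy s Hs3). specialize (C1 s (conj Hs1 Hs2)).
    apply Rabs_def2 in Hy. lra. }
  assert (C3 : m = b).
  { destruct (Req_dec m b); auto. exfalso.
    assert (HD : Derive P m > 0) by (unfold P in *; apply Hreg; lra).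
    destruct (deriv_pos_right P m (Derive P m)) as [d [Hd Hr]]; auto.
    { apply Derive_correct. apply psi_ex_derive. lra. }
    set (t := m + Rmin (d/2) (b - m)).
    assert (Ht1 : m < t) by (unfold t; apply Rplus_lt_reg_l with (-m); ring_simplify; apply Rmin_glb_lt; lra).
    assert (Ht2 : t <= b) by (unfold t; assert (Rmin (d/2) (b-m) <= b - m) by apply Rmin_r; lra).
    assert (Ht3 : t - m < d) by (unfold t; assert (Rmin (d/2) (b-m) <= d/2) by apply Rmin_l; lra).
    assert (E t).
    { split. lra. intros s Hs. destruct (Rlt_le_dec s m). apply C1; lra.
      destruct (Req_dec s m) as [->|]. auto.
      specialize (Hr (s - m)). replace (m + (s - m)) with s in Hr by ring.
      assert (P s > P m) by (apply Hr; lra). lra. }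
    assert (t <= m) by (apply Hub; auto). lra. }
  subst m. exact C2.
Qed.
End S.



Section S.
Variables F f : R -> R.
Hypothesis Hdist : density_dist F f.

Lemma rev_deriv c q p : 0 < q -> 0 < p / q < 1 ->
  is_derive (revenue F c q) p ((1 - F (p/q)) + (p - c) * (- (f (p/q) / q))).
Proof.
  destruct Hdist as (H0 & H1 & Hc & Hd & Hp & Hf & _). intros Hq Hx.
  unfold revenue. auto_derive.
  - exists (f (p/q)); apply Hd; auto.
  - change (fun x : R => F x) with F. change (p * / q) with (p / q). rewrite (is_derive_unique F (p/q) (f (p/q))) by (apply Hd; auto). field. lra.
Qed.

Lemma opt_char c q p : 0 < c -> c < q -> is_opt_price F c q p ->
  0 < p/q < 1 /\ psi F f (p/q) = c/q.
Proof.
  intros Hc Hcq Hopt.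
  pose proof (Hdist) as (H0 & H1 & Hcont & Hd & Hp & Hf & _).
  set (p0 := (c+q)/2).
  assert (Hx0 : 0 < p0/q < 1) by (split; [apply Rdiv_lt_0_compat; unfold p0; lra | apply (Rmult_lt_reg_r q); [lra| unfold Rdiv; rewrite Rmult_assoc, Rinv_l, Rmult_1_r by lra; unfold p0; lra]]).
  assert (Hr0 : revenue F c q p0 > 0).
  { unfold revenue. apply Rmult_lt_0_compat. unfold p0; lra.
    pose proof (F_lt1 F f Hdist (p0/q)). lra. }
  pose proof (Hopt p0) as Hp0.
  assert (Hpc : p > c).
  { apply Rnot_le_gt. intro Hle. unfold revenue in Hp0.
    pose proof (F_bounds F f Hdist (p/q)).
    assert ((p - c) * (1 - F (p/q)) <= 0).
    { apply Rmult_le_0_r; lra. }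
    unfold revenue in Hr0. lra. }
  assert (Hxpos : 0 < p/q) by (apply Rdiv_lt_0_compat; lra).
  assert (Hx1 : p/q < 1).
  { apply Rnot_le_lt. intro Hle. unfold revenue in Hp0, Hr0. rewrite (H1 (p/q)) in Hp0 by lra. lra. }
  assert (Hx : 0 < p/q < 1) by lra.
  split; auto.
  pose proof (rev_deriv c q p ltac:(lra) Hx) as HD.
  apply is_derive_Reals in HD.
  assert (HD0 := deriv_maximum (revenue F c q) (p-1) (p+1) p (exist _ _ HD) ltac:(lra) ltac:(lra)
     (fun x _ _ => Hopt x)).
  simpl in HD0.
  specialize (Hp (p/q) Hx).
  unfold psi, r.
  assert (1 - F (p/q) = (p - c) * (f (p/q) / q)) by lra.
  rewrite H. field. split; lra.
Qed.

Lemma opt_exists c q : 0 < c -> c < q -> exists p, is_opt_price F c q p.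
Proof.
  intros Hc Hcq.
  pose proof (Hdist) as (H0 & H1 & Hcont & _).
  destruct (continuity_ab_maj (revenue F c q) c q) as [M [HM HMr]]; [lra| |].
  { intros x _. apply continuity_pt_filterlim. unfold revenue.
    apply (continuous_mult (fun p => p - c) (fun p => 1 - F (p / q))).
    - apply (continuous_minus (fun p => p) (fun _ => c)). apply continuous_id. apply continuous_const.
    - apply (continuous_minus (fun _ => 1) (fun p => F (p / q))). apply continuous_const.
      apply (continuous_comp (fun p => p / q) F). 
      + apply (continuous_scal_l (fun p => p) (/q)) . apply continuous_id.
      + apply Hcont. }
  exists M. intros p'.
  assert (Hc0 : revenue F c q c <= revenue F c q M) by (apply HM; lra).
  assert (revenue F c q c = 0) by (unfold revenue; ring).
  destruct (Rle_dec c p').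
  - destruct (Rle_dec p' q). apply HM; lra.
    replace (revenue F c q p') with 0. lra. unfold revenue. rewrite (H1 (p'/q)). ring.
    apply (Rmult_le_reg_r q); [lra|]; unfold Rdiv; rewrite Rmult_assoc, Rinv_l, Rmult_1_r by lra; lra.
  - pose proof (F_bounds F f Hdist (p'/q)).
    assert ((p' - c) * (1 - F (p'/q)) <= 0) by (apply Rmult_le_0_r; lra).
    unfold revenue at 1. lra.
Qed.
End S.

Theorem lemma8 (F f : R -> R)
  (Hdist : density_dist F f)
  (Hreg : forall v, 0 < v < 1 -> psi F f v > 0 -> Derive (psi F f) v > 0) :
  (forall ql qh c : R, 0 < ql -> ql < qh -> 0 < c -> c < ql ->
     forall ph pl : R, is_opt_price F c qh ph -> is_opt_price F c ql pl ->
     forall v : R, ph / qh < v < pl / ql -> cond_at F f v)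
  <->
  (forall v : R, 0 < v < 1 -> psi F f v > 0 -> cond_at F f v).
Proof.
  split.
  - intros H v Hv Hpsi.
    set (a := psi F f v) in *.
    assert (Hav : a < v).
    { pose proof Hdist as (_ & _ & _ & _ & Hp & _).
      pose proof (F_lt1 F f Hdist v ltac:(lra)).
      assert (r F f v > 0) by (unfold r; apply Rdiv_lt_0_compat; [lra| apply Hp; lra]).
      unfold a, psi. lra. }
    destruct (opt_exists F f Hdist a 2) as [ph Hph]; [lra|lra|].
    destruct (opt_exists F f Hdist a ((a+1)/2)) as [pl Hpl]; [lra|lra|].
    destruct (opt_char F f Hdist a 2 ph) as [Hxh Hpsih]; [lra|lra|auto|].
    destruct (opt_char F f Hdist a ((a+1)/2) pl) as [Hxl Hpsil]; [lra|lra|auto|].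
    apply (H ((a+1)/2) 2 a ltac:(lra) ltac:(lra) ltac:(lra) ltac:(lra) ph pl Hph Hpl v).
    split.
    + apply Rnot_le_lt. intro Hle.
      pose proof (mono F f Hdist Hreg v (ph/2) ltac:(lra) Hle ltac:(lra) Hpsi).
      fold a in H0. rewrite Hpsih in H0.
      assert (a / 2 < a) by lra. lra.
    + apply Rnot_le_lt. intro Hle.
      assert (Hq : a / ((a+1)/2) > a).
      { apply Rlt_gt. apply (Rmult_lt_reg_r ((a+1)/2)); [lra|].
        replace (a / ((a+1)/2) * ((a+1)/2)) with a by (field; lra). nra. }
      pose proof (mono F f Hdist Hreg (pl/((a+1)/2)) v ltac:(lra) Hle ltac:(lra) ltac:(lra)).
      fold a in H0. lra.
  - intros H ql qh c Hql Hqlh Hc Hcql ph pl Hph Hpl v Hv.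
    destruct (opt_char F f Hdist c qh ph) as [Hxh Hpsih]; [lra|lra|auto|].
    destruct (opt_char F f Hdist c ql pl) as [Hxl Hpsil]; [lra|lra|auto|].
    assert (c / qh > 0) by (apply Rdiv_lt_0_compat; lra).
    pose proof (mono F f Hdist Hreg (ph/qh) v ltac:(lra) ltac:(lra) ltac:(lra) ltac:(lra)).
    apply H; lra.
Qed.
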